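(* Let $k\ge1$ and let $\mathcal{C}$ be a set of admissible $(k+1)$-words. Let $W_k\langle\mathcal{C}\rangle$ be the smallest $T_k$-invariant subspace of $V_k$ containing $\psi_k(V_1)$ and the vectors $[\eta w]$ for $w\in\mathcal{C}$. Then $T_k\langle\mathcal{C}\rangle$ maps $W_k\langle\mathcal{C}\rangle$ into itself, and the induced map on $V_k/W_k\langle\mathcal{C}\rangle$ is nilpotent.
   Context: Let $\mathcal{A}$ be a finite alphabet of $r$ symbols and $T=(T_{x,y})$ an $r\times r$ matrix with entries in $\{0,1\}$. An admissible $k$-word is a string $a_1\cdots a_k$ of symbols with $T_{a_{i+1},a_i}=1$ for $1\le i\le k-1$. $V_k$ is the complex vector space with basis $\{[w]\}$ indexed by admissible $k$-words. $\psi_k:V_1\to V_k$ is linear with $\psi_k([a])$ the sum of $[w]$ over all admissible $k$-words beginning with $a$. $T_k:V_k\to V_k$ is linear with $T_k([a_1\cdots a_k])=\sum[a_2\cdots a_kx]$, summed over symbols $x$ with $a_2\cdots a_kx$ admissible. For a word $w$, $\beta w$ and $\eta w$ denote the words obtained by deleting the last and the first symbol, respectively. For an admissible $(k+1)$-word $w$, $E_w:V_k\to V_k$ is the linear map with $E_w[\beta w]=[\eta w]$ and $E_w[u]=0$ for every other admissible $k$-word $u$. For a set $\mathcal{C}$ of admissible $(k+1)$-words, $T_k\langle\mathcal{C}\rangle=T_k-\sum_{w\in\mathcal{C}}E_w$. *)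

(* Defs.v *)
From HB Require Import structures.
From mathcomp Require Import all_boot all_order all_algebra.
From mathcomp Require Import reals Rstruct complex.
Set Implicit Arguments. Unset Strict Implicit. Unset Printing Implicit Defensive.
Import GRing.Theory.
Local Open Scope ring_scope.

Definition C : fieldType := (Rdefinitions.R)[i].

Section Words.
(* Alphabet 'I_r (r symbols) and 0/1 transition matrix T (entries in nat). *)
Variables (r : nat) (T : 'M[nat]_r).

Definition admissible (s : seq 'I_r) : bool :=
  sorted (fun a b : 'I_r => T b a == 1%N) s.

Definition Adm (k : nat) : finType := {w : k.-tuple 'I_r | admissible w}.

Definition word (k : nat) (u : Adm k) : seq 'I_r := val (val u).

Definition V (k : nat) : vectType C := {ffun Adm k -> C^o}.

(* [s] : the basis vector of the word s (it is the basis vector [u] when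
   s is the admissible k-word u). *)
Definition bvec (k : nat) (s : seq 'I_r) : V k :=
  [ffun u : Adm k => ((word u == s) : nat)%:R].

Definition beta (s : seq 'I_r) : seq 'I_r := take (size s).-1 s.
Definition eta (s : seq 'I_r) : seq 'I_r := behead s.

Definition psi_basis (k : nat) (a : 'I_r) : V k :=
  \sum_(u : Adm k | ohead (word u) == Some a) bvec k (word u).

Definition Tk_basis (k : nat) (u : Adm k) : V k :=
  \sum_(x : 'I_r | admissible (rcons (eta (word u)) x))
     bvec k (rcons (eta (word u)) x).

Definition Tk (k : nat) (v : V k) : V k :=
  \sum_(u : Adm k) v u *: Tk_basis u.

Definition Ew (k : nat) (w : Adm k.+1) (v : V k) : V k :=
  \sum_(u : Adm k | word u == beta (word w)) v u *: bvec k (eta (word w)).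

Definition TkC (k : nat) (Cs : {set Adm k.+1}) (v : V k) : V k :=
  Tk v - \sum_(w in Cs) Ew w v.

Definition Tk_invariant (k : nat) (U : {vspace V k}) : Prop :=
  forall v, v \in U -> Tk v \in U.

Definition contains_gens (k : nat) (Cs : {set Adm k.+1}) (U : {vspace V k})
  : Prop :=
  (forall a : 'I_r, psi_basis k a \in U) /\
  (forall w : Adm k.+1, w \in Cs -> bvec k (eta (word w)) \in U).

Definition is_Wk (k : nat) (Cs : {set Adm k.+1}) (W : {vspace V k}) : Prop :=
  [/\ Tk_invariant W, contains_gens Cs W &
      forall U : {vspace V k}, Tk_invariant U -> contains_gens Cs U ->
        (W <= U)%VS].

End Words.

(* Main.v *)
Require Import Defs.
From HB Require Import structures.
From mathcomp Require Import all_boot all_order all_algebra.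
From mathcomp Require Import reals Rstruct complex.
Set Implicit Arguments. Unset Strict Implicit. Unset Printing Implicit Defensive.
Local Open Scope ring_scope.
Import GRing.Theory.

Lemma drop_succ (A : Type) j (s : seq A) : drop j.+1 s = behead (drop j s).
Proof. by rewrite -drop1 drop_drop add1n. Qed.

Lemma L1 (A : Type) (ws wt wu : seq A) j k : size ws = k -> (j.+1 < k)%N ->
  behead ws = take k.-1 wt -> drop j wu = take (k-j) ws -> drop j.+1 wu = take (k - j.+1) wt.
Proof.
move=> sws ljk hb hd. rewrite drop_succ hd.
case: ws sws hb hd => [|a ws'] /= sws hb hd; first by rewrite -sws in ljk.
rewrite -(subnSK (ltnW ljk)) /= hb take_takel // -sws subSS leq_subr. done.
Qed.

Section S.
Variables (r : nat) (T : 'M[nat]_r) (k : nat).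
Hypothesis hk : (0 < k)%N.

Lemma size_word (u : Adm T k) : size (word u) = k. Proof. by rewrite /word size_tuple. Qed.
Lemma adm_word (u : Adm T k) : admissible T (word u). Proof. exact: (valP u). Qed.
Lemma word_inj (u t : Adm T k) : (word u == word t) = (u == t). Proof. by rewrite /word !val_eqE. Qed.

Lemma TkE (v : V T k) t : Tk v t = \sum_(s | Defs.eta (word s) == beta (word t)) v s.
Proof.
rewrite /Tk sum_ffunE [RHS]big_mkcond /=. apply: eq_bigr => s _.
rewrite ffunE /Tk_basis sum_ffunE.
have E : \sum_(x | admissible T (rcons (Defs.eta (word s)) x)) bvec T k (rcons (Defs.eta (word s)) x) t
   = ((Defs.eta (word s) == beta (word t)):nat)%:R.
  under eq_bigr do rewrite ffunE.
  move: (adm_word t) (size_word t).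
  case/lastP: (word t) => [|t' y]; first by move=> _ /= k0; exfalso; move: hk; rewrite -k0.
  move=> admt _. rewrite /beta size_rcons /= -cats1 take_size_cat //.
  rewrite big_mkcond /=.
  rewrite (eq_bigr (fun x => if x == y then ((Defs.eta (word s) == t'):nat)%:R else 0)).
    by rewrite -big_mkcond big_pred1_eq.
  move=> x _; rewrite cats1 eqseq_rcons eq_sym; case: (eqVneq x y) => [->|_]; last by rewrite andbF if_same.
  by rewrite andbT; case: eqP => [->|_]; rewrite ?admt ?if_same.
set S := (X in _ *: X). have -> : S = _ := E. by case: eqP => _ /=; [exact: mulr1 | exact: scaler0].
Qed.

Lemma beta_word (t : Adm T k) : beta (word t) = take k.-1 (word t).
Proof. by rewrite /beta size_word. Qed.

Lemma step j (u t : Adm T k) (x : C) : (j.+1 < k)%N ->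
  \sum_(s : Adm T k | (Defs.eta (word s) == beta (word t)) && (drop j (word u) == take (k-j) (word s))) x
  = if drop j.+1 (word u) == take (k-j.+1) (word t) then x else 0.
Proof.
move=> ljk; case: ifP => [/eqP c|nc]; last first.
  apply: big1 => s /andP[/eqP e1 /eqP e2]; move/negP: nc; case.
  apply/eqP; apply: (L1 (size_word s) ljk _ e2). exact: etrans e1 (beta_word t).
have ljk' : (j < size (word u))%N by rewrite size_word ltnW.
case E: (drop j (word u)) => [|a d].
  by move: (size_drop j (word u)); rewrite E size_word /= => /eqP; rewrite eq_sym subn_eq0 leqNgt ltnW.
have dE : d = drop j.+1 (word u) by rewrite drop_succ E.
have [b [wt' Et]] : exists b wt', word t = b :: wt'.
  move: (size_word t); case: (word t) => [|b wt'] szt; last by exists b, wt'.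
  by exfalso; move: hk; rewrite -szt.
have admt := adm_word t; rewrite Et in admt.
have sz : size (a :: beta (word t)) == k.
  by rewrite beta_word /= size_takel ?size_word ?leq_pred // prednK.
have ad : admissible T (a :: beta (word t)).
  have eab : T b a == 1%N.
    have := drop_sorted j (adm_word u). rewrite E dE c Et -(subnSK ljk) /=.
    by case/andP.
  have := take_sorted k.-1 admt.
  rewrite beta_word Et; case Ek: k.-1 => [|n].
    by move: ljk; rewrite -(prednK hk) Ek.
  by rewrite /admissible /= eab.
pose s0 : Adm T k := exist (fun w : k.-tuple 'I_r => admissible T w) (Tuple sz) ad.
rewrite (eq_bigl (pred1 s0)) ?big_pred1_eq // => s /=.
rewrite -word_inj.
have -> : word s0 = a :: beta (word t) by [].
have [b' [s' Es]] : exists b' s', word s = b' :: s'.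
  move: (size_word s); case: (word s) => [|b' s'] szs; last by exists b', s'.
  by exfalso; move: hk; rewrite -szs.
rewrite Es -(subnSK (ltnW ljk)) /= !eqseq_cons.
case: (eqVneq s' (beta (word t))) => [->|_]; last by rewrite !andbF.
rewrite beta_word take_takel; last by rewrite -subn1 leq_sub2l.
by rewrite -c -dE eqxx /= !andbT eq_sym.
Qed.

Lemma iterTkE j (v : V T k) t : (j < k)%N ->
  iter j (@Tk r T k) v t = \sum_(u | drop j (word u) == take (k - j) (word t)) v u.
Proof.
elim: j t => [t _|j IH t ljk].
  rewrite /= ?drop0 subn0 take_oversize ?size_word //.
  by rewrite (eq_bigl (pred1 t)) ?big_pred1_eq // => u; rewrite /= drop0 word_inj.
rewrite iterS TkE.
have IH' := fun t => IH t (ltnW ljk).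
transitivity (\sum_(s : Adm T k | Defs.eta (word s) == beta (word t)) \sum_(u : Adm T k | drop j (word u) == take (k - j) (word s)) v u).
  apply (eq_bigr _ (fun s _ => IH' s)).
rewrite (exchange_big_dep predT) //=.
rewrite [RHS]big_mkcond; apply: eq_bigr => u _.
exact: step.
Qed.

Lemma psiE a (t : Adm T k) : psi_basis T k a t = ((ohead (word t) == Some a):nat)%:R.
Proof.
rewrite /psi_basis sum_ffunE.
under eq_bigr do rewrite ffunE.
rewrite big_mkcond (bigD1 t) //= big1 ?addr0.
  by case: ifP; rewrite ?eqxx.
move=> u /negbTE ne; rewrite (word_inj t u) (eq_sym t) ne; by case: ifP.
Qed.

Lemma iter_span (v : V T k) : iter k.-1 (@Tk r T k) v =
  \sum_(a : 'I_r) (\sum_(u | drop k.-1 (word u) == [:: a]) v u) *: psi_basis T k a.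
Proof.
apply/ffunP => t.
rewrite iterTkE ?ltn_predL // sum_ffunE.
have -> : (k - k.-1 = 1)%N by rewrite -subn1 subKn.
have [b [wt' Et]] : exists b wt', word t = b :: wt'.
  move: (size_word t); case: (word t) => [|b wt'] szt; last by exists b, wt'.
  by exfalso; move: hk; rewrite -szt.
rewrite [RHS](bigD1 b) //= [X in _ = _ + X]big1 ?addr0.
  rewrite ffunE psiE Et /= eqxx take0; exact: (esym (mulr1 _)).
move=> a ne; rewrite ffunE psiE Et.
have -> : (Some b == Some a) = false by apply/eqP => -[e]; move: ne; rewrite e eqxx.
exact: scaler0.
Qed.
End S.

Unset Implicit Arguments.
Set Strict Implicit.
Set Printing Implicit Defensive.

Theorem lemma1p4 (r : nat) (T : 'M[nat]_r)
    (hT : forall x y : 'I_r, (T x y <= 1)%N)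
    (k : nat) (hk : (1 <= k)%N) (Cs : {set Adm T k.+1})
    (W : {vspace V T k}) (hW : is_Wk Cs W) :
  (forall v, v \in W -> TkC Cs v \in W) /\
  (exists m : nat, forall v : V T k, iter m (TkC Cs) v \in W).
Proof.
case: hW => inv [psi_in eta_in] _.
have sumE_in : forall v, \sum_(w in Cs) Ew w v \in W.
  move=> v; apply: memv_suml => w wC; rewrite /Ew; apply: memv_suml => u _.
  by apply: memvZ; exact: eta_in.
have TkB : forall x y : V T k, Tk (x - y) = Tk x - Tk y.
  move=> x y; rewrite /Tk -sumrB; apply: eq_bigr => u _; by rewrite !ffunE scalerBl.
split.
  by move=> v Hv; rewrite /TkC; apply: memvB; [exact: inv | exact: sumE_in].
exists k.-1 => v.
have diff : forall m, iter m (TkC Cs) v - iter m (@Tk r T k) v \in W.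
  elim=> [|m IH]; first by rewrite /= subrr mem0v.
  rewrite !iterS /TkC addrAC -TkB.
  by apply: memvB; [exact: inv | exact: sumE_in].
rewrite -(subrK (iter k.-1 (@Tk r T k) v) (iter k.-1 (TkC Cs) v)).
apply: memvD; first exact: diff.
rewrite iter_span //; apply: memv_suml => a _; apply: memvZ; exact: psi_in.
Qed.

Print Assumptions lemma1p4.
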